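(* Consider the quadratic finite-horizon dynamic multi-agent system described in the context, with constants $\gamma,\alpha,\beta,\rho>0$ such that $\|\mathbf x_i(0)\|\le\gamma$, $\|\mathbf A_i\|\le\alpha$, $\|\mathbf B_i\|\le\beta$ and $\mathbf H_i\succeq\rho\mathbf I$ for all $i\in\mathcal V$, and assume $C(t)>0$ for all $t\in\mathcal T$. Let $\lambda^\dagger>0$ and let $\delta_{\max}>0$ satisfy $$\delta_{\max}\sum_{t=1}^{N}\gamma\,\alpha^{2t-1}\le\frac{\sqrt{C(0)\rho}}{n\beta}\lambda^\dagger,$$ and, for every $k\in\mathcal T$ with $k\neq0$, $$\delta_{\max}\sum_{t=k+1}^{N}\Big[\gamma\,\alpha^{2t-k-1}+\beta\sum_{j=0}^{k-1}\sqrt{\tfrac{C(j)}{\rho}}\;\alpha^{2t-j-k-2}\Big]\le\frac{\sqrt{C(k)\rho}}{n\beta}\lambda^\dagger.$$ Then for every choice of symmetric positive definite matrices $\mathbf Q_i,\mathbf R_i$ ($i\in\mathcal V$) with $\|\mathbf Q_i\|\le\delta_{\max}$, every competitive equilibrium $(\boldsymbol\lambda^\ast,\mathbf U^\ast,\mathbf E^\ast)$ satisfies $\lambda^\ast_t\le\lambda^\dagger$ for all $t\in\mathcal T$.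
   Context: Finite-horizon dynamic multi-agent system: $n$ agents $\mathcal V=\{1,\dots,n\}$, horizon $N\ge1$, $\mathcal T=\{0,\dots,N-1\}$. Agent $i$ has state $\mathbf x_i(t)\in\mathbb R^d$, input $\mathbf u_i(t)\in\mathbb R^m$, dynamics $\mathbf x_i(t+1)=\mathbf A_i\mathbf x_i(t)+\mathbf B_i\mathbf u_i(t)$ with given $\mathbf x_i(0)$, excess resource $a_i(t)\in\mathbb R$, and $C(t)=\sum_{i=1}^na_i(t)$. Quadratic case: agent $i$'s parameter is $\theta_i=(\mathbf Q_i,\mathbf R_i)$ with $\mathbf Q_i\in\mathbb R^{d\times d}$, $\mathbf R_i\in\mathbb R^{m\times m}$ symmetric positive definite; running utility $f(\mathbf x,\mathbf u;\theta_i)=-\mathbf x^\top\mathbf Q_i\mathbf x-\mathbf u^\top\mathbf R_i\mathbf u$; terminal utility $\phi(\mathbf x;\theta_i)=-\mathbf x^\top\mathbf Q_i\mathbf x$; consumption $h_i(\mathbf u)=\mathbf u^\top\mathbf H_i\mathbf u$ with $\mathbf H_i$ symmetric positive definite. Norms are Euclidean / induced operator norms. A competitive equilibrium is a triple $(\boldsymbol\lambda^\ast,\mathbf U^\ast,\mathbf E^\ast)$, $\boldsymbol\lambda^\ast=(\lambda^\ast_0,\dots,\lambda^\ast_{N-1})\in\mathbb R^N$, such that (i) for each $i\in\mathcal V$, $(\mathbf U_i^\ast,\mathbf E_i^\ast)=((\mathbf u_i^\ast(t))_{t\in\mathcal T},(e_i^\ast(t))_{t\in\mathcal T})$ is a maximizer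 of $\phi(\mathbf x_i(N);\theta_i)+\sum_{t=0}^{N-1}\big(f(\mathbf x_i(t),\mathbf u_i(t);\theta_i)+\lambda^\ast_t e_i(t)\big)$ over all inputs $\mathbf u_i(t)\in\mathbb R^m$ and trades $e_i(t)\in\mathbb R$ subject to the dynamics and $e_i(t)\le a_i(t)-h_i(\mathbf u_i(t))$ for all $t\in\mathcal T$; and (ii) $\sum_{i=1}^ne_i^\ast(t)=0$ for all $t\in\mathcal T$. *)

(* Defs.v *)
From HB Require Import structures.
From mathcomp Require Import all_boot all_order all_algebra.
From mathcomp Require Import classical_sets reals.
Set Implicit Arguments. Unset Strict Implicit. Unset Printing Implicit Defensive.
Import Order.TTheory GRing.Theory Num.Theory.
Local Open Scope ring_scope.
Local Open Scope classical_set_scope.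

Section Defs.
Variable R : realType.

Definition vnorm (k : nat) (v : 'cV[R]_k) : R :=
  Num.sqrt (\sum_(i < k) v i 0 ^+ 2).

Definition opnorm (p q : nat) (M : 'M[R]_(p, q)) : R :=
  sup [set vnorm (M *m v) | v in [set v : 'cV[R]_q | vnorm v <= 1]].

Definition quad (k : nat) (M : 'M[R]_k) (v : 'cV[R]_k) : R :=
  ((v^T *m M) *m v) 0 0.

Definition symmetric_mx (k : nat) (M : 'M[R]_k) : Prop := M^T = M.
Definition pos_def (k : nat) (M : 'M[R]_k) : Prop :=
  forall v : 'cV[R]_k, v != 0 -> 0 < quad M v.
Definition sym_pd (k : nat) (M : 'M[R]_k) : Prop := symmetric_mx M /\ pos_def M.
(* positive semidefinite; H >= rho I  is  psd (H - rho%:M) *)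
Definition psd (k : nat) (M : 'M[R]_k) : Prop := forall v : 'cV[R]_k, 0 <= quad M v.

Fixpoint traj (d m : nat) (A : 'M[R]_d) (B : 'M[R]_(d, m)) (x0 : 'cV[R]_d)
    (u : nat -> 'cV[R]_m) (t : nat) : 'cV[R]_d :=
  match t with
  | 0 => x0
  | t'.+1 => A *m traj A B x0 u t' + B *m u t'
  end.

Definition Ctot (n : nat) (a : 'I_n -> nat -> R) (t : nat) : R := \sum_(i < n) a i t.

Definition payoff (N d m : nat) (A : 'M[R]_d) (B : 'M[R]_(d, m)) (x0 : 'cV[R]_d)
    (Q : 'M[R]_d) (Rm : 'M[R]_m) (lam : nat -> R)
    (u : nat -> 'cV[R]_m) (e : nat -> R) : R :=
  - quad Q (traj A B x0 u N)
  + \sum_(t < N) (- quad Q (traj A B x0 u t) - quad Rm (u t) + lam t * e t).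

Definition feasible (N m : nat) (H : 'M[R]_m) (ai : nat -> R)
    (u : nat -> 'cV[R]_m) (e : nat -> R) : Prop :=
  forall t, (t < N)%N -> e t <= ai t - quad H (u t).

Definition competitive_equilibrium (n N d m : nat)
    (A : 'I_n -> 'M[R]_d) (B : 'I_n -> 'M[R]_(d, m)) (x0 : 'I_n -> 'cV[R]_d)
    (H : 'I_n -> 'M[R]_m) (a : 'I_n -> nat -> R)
    (Q : 'I_n -> 'M[R]_d) (Rm : 'I_n -> 'M[R]_m)
    (lam : nat -> R) (U : 'I_n -> nat -> 'cV[R]_m) (E : 'I_n -> nat -> R) : Prop :=
  (forall i : 'I_n,
     feasible N (H i) (a i) (U i) (E i) /\
     forall (u : nat -> 'cV[R]_m) (e : nat -> R),
       feasible N (H i) (a i) u e ->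
       payoff N (A i) (B i) (x0 i) (Q i) (Rm i) lam u e
       <= payoff N (A i) (B i) (x0 i) (Q i) (Rm i) lam (U i) (E i)) /\
  (forall t, (t < N)%N -> \sum_(i < n) E i t = 0).

End Defs.

(* Main.v *)
Require Import Defs.
From HB Require Import structures.
From mathcomp Require Import all_boot all_order all_algebra.
From mathcomp Require Import classical_sets reals.
From mathcomp Require Import ring lra.
Import Order.TTheory GRing.Theory Num.Theory.
Set Implicit Arguments. Unset Strict Implicit. Unset Printing Implicit Defensive.
Local Open Scope ring_scope.

Section Aux.
Variable R : realType.

Lemma lim0 (X Y : R) : (forall r, 0 < r -> r <= 1 -> X <= r * Y) -> X <= 0.
Proof.
move=> H; rewrite leNgt; apply/negP => X0.
have XY : X <= Y by have := H 1 ltr01 (lexx _); rewrite mul1r.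
have Y0 : 0 < Y by apply: lt_le_trans XY.
have r0 : 0 < X / (2 * Y) by rewrite divr_gt0 // mulr_gt0.
have r1 : X / (2 * Y) <= 1.
  rewrite ler_pdivrMr ?mulr_gt0 // mul1r; lra.
have := H _ r0 r1.
have -> : X / (2 * Y) * Y = X / 2 by field; lra.
lra.
Qed.

Lemma disc (X Y B : R) : 0 <= Y -> (forall t, 0 <= X - 2 * t * B + t ^+ 2 * Y) ->
  B <= Num.sqrt X * Num.sqrt Y.
Proof.
move=> Y0 H.
have X0 : 0 <= X by have := H 0; rewrite !(mul0r, mulr0, expr0n) /=; lra.
case: (lerP B 0) => B0; first by apply: le_trans B0 _; rewrite mulr_ge0 ?sqrtr_ge0.
case: (eqVneq Y 0) => [Ye|Yn].
  have := H ((X + 1) / (2 * B)); rewrite Ye mulr0 addr0.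
  have -> : 2 * ((X + 1) / (2 * B)) * B = X + 1 by field; lra.
  lra.
have Yp : 0 < Y by rewrite lt_neqAle eq_sym Yn.
have h := H (B / Y).
have h2 : B ^+ 2 <= X * Y.
  have : 0 <= (X - 2 * (B / Y) * B + (B / Y) ^+ 2 * Y) * Y by rewrite mulr_ge0 // ltW.
  have -> : (X - 2 * (B / Y) * B + (B / Y) ^+ 2 * Y) * Y = X * Y - B ^+ 2 by field; lra.
  lra.
rewrite -sqrtrM // -(ger0_norm (ltW B0)) -sqrtr_sqr ler_sqrt //.
by rewrite mulr_ge0 // ltW.
Qed.

Lemma sum_quad (n : nat) (F G K : 'I_n -> R) (r : R) :
  \sum_(i < n) (F i - 2 * r * G i + r ^+ 2 * K i) =
  \sum_(i < n) F i - 2 * r * \sum_(i < n) G i + r ^+ 2 * \sum_(i < n) K i.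
Proof. by rewrite big_split sumrB /= !mulr_sumr. Qed.

Lemma CS_sum (k : nat) (a b : 'I_k -> R) :
  \sum_(i < k) a i * b i <= Num.sqrt (\sum_(i < k) a i ^+ 2) * Num.sqrt (\sum_(i < k) b i ^+ 2).
Proof.
apply: disc; first by apply: sumr_ge0 => i _; rewrite sqr_ge0.
move=> t; rewrite -sum_quad; apply: sumr_ge0 => i _.
have -> : a i ^+ 2 - 2 * t * (a i * b i) + t ^+ 2 * b i ^+ 2 = (a i - t * b i) ^+ 2 by ring.
by rewrite sqr_ge0.
Qed.

Lemma CS_sum2 (k : nat) (a b : 'I_k -> R) :
  (\sum_(i < k) a i * b i) ^+ 2 <= (\sum_(i < k) a i ^+ 2) * (\sum_(i < k) b i ^+ 2).
Proof.
have A0 : 0 <= \sum_(i < k) a i ^+ 2 by apply: sumr_ge0 => i _; rewrite sqr_ge0.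
have B0 : 0 <= \sum_(i < k) b i ^+ 2 by apply: sumr_ge0 => i _; rewrite sqr_ge0.
have h1 := CS_sum a b.
have h2 := CS_sum (fun i => - a i) b.
have e : \sum_(i < k) (- a i) * b i = - \sum_(i < k) a i * b i.
  by rewrite -sumrN; apply: eq_bigr => i _; rewrite mulNr.
have e2 : \sum_(i < k) (- a i) ^+ 2 = \sum_(i < k) a i ^+ 2.
  by apply: eq_bigr => i _; rewrite sqrrN.
rewrite e e2 in h2.
rewrite -(sqr_sqrtr A0) -(sqr_sqrtr B0) -exprMn.
rewrite -ler_sqrt ?exprn_ge0 ?mulr_ge0 ?sqrtr_ge0 // !sqrtr_sqr.
rewrite (ger0_norm (mulr_ge0 (sqrtr_ge0 _) (sqrtr_ge0 _))).
rewrite ler_norml h1 andbT; lra.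
Qed.

End Aux.

Section Vec.
Variable R : realType.

Definition dot k (v w : 'cV[R]_k) : R := \sum_(i < k) v i 0 * w i 0.
Definition bil k (M : 'M[R]_k) (v w : 'cV[R]_k) : R := dot v (M *m w).

Lemma vnorm_ge0 k (v : 'cV[R]_k) : 0 <= vnorm v.
Proof. exact: sqrtr_ge0. Qed.

Lemma vnorm_sq k (v : 'cV[R]_k) : vnorm v ^+ 2 = \sum_(i < k) v i 0 ^+ 2.
Proof. by rewrite /vnorm sqr_sqrtr // sumr_ge0 // => i _; rewrite sqr_ge0. Qed.

Lemma dot_vv k (v : 'cV[R]_k) : dot v v = vnorm v ^+ 2.
Proof. by rewrite vnorm_sq; apply: eq_bigr => i _; rewrite expr2. Qed.

Lemma dotC k (v w : 'cV[R]_k) : dot v w = dot w v.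
Proof. by apply: eq_bigr => i _; rewrite mulrC. Qed.

Lemma dotDr k (v w1 w2 : 'cV[R]_k) : dot v (w1 + w2) = dot v w1 + dot v w2.
Proof. by rewrite /dot -big_split; apply: eq_bigr => i _; rewrite mxE mulrDr. Qed.

Lemma dotNr k (v w : 'cV[R]_k) : dot v (- w) = - dot v w.
Proof. by rewrite /dot -sumrN; apply: eq_bigr => i _; rewrite mxE mulrN. Qed.

Lemma dotZr k (v w : 'cV[R]_k) c : dot v (c *: w) = c * dot v w.
Proof. by rewrite /dot mulr_sumr; apply: eq_bigr => i _; rewrite mxE mulrCA. Qed.

Lemma dotBr k (v w1 w2 : 'cV[R]_k) : dot v (w1 - w2) = dot v w1 - dot v w2.
Proof. by rewrite dotDr dotNr. Qed.

Lemma dot0r k (v : 'cV[R]_k) : dot v 0 = 0.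
Proof. by rewrite /dot big1 // => i _; rewrite mxE mulr0. Qed.

Lemma CS k (v w : 'cV[R]_k) : dot v w <= vnorm v * vnorm w.
Proof. exact: CS_sum. Qed.

Lemma vnormD k (v w : 'cV[R]_k) : vnorm (v + w) <= vnorm v + vnorm w.
Proof.
have h : vnorm (v + w) ^+ 2 <= (vnorm v + vnorm w) ^+ 2.
  rewrite -dot_vv dotDr ![dot (v + w) _]dotC !dotDr !dot_vv [dot w v]dotC.
  have := CS v w; lra.
by rewrite -(ler_pXn2r (isT : (0 < 2)%N)) // ?nnegrE ?addr_ge0 ?vnorm_ge0.
Qed.

Lemma vnormZ k (v : 'cV[R]_k) c : vnorm (c *: v) = `|c| * vnorm v.
Proof.
rewrite /vnorm -sqrtr_sqr -sqrtrM ?sqr_ge0 // mulr_sumr; congr Num.sqrt.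
by apply: eq_bigr => i _; rewrite mxE exprMn.
Qed.

Lemma vnorm0 k : vnorm (0 : 'cV[R]_k) = 0.
Proof. by rewrite -(scale0r 0) vnormZ normr0 mul0r. Qed.

Lemma mv_bound p q (M : 'M[R]_(p, q)) v :
  vnorm (M *m v) <= Num.sqrt (\sum_(i < p) \sum_(j < q) M i j ^+ 2) * vnorm v.
Proof.
rewrite /vnorm -sqrtrM; last by apply: sumr_ge0 => i _; apply: sumr_ge0 => j _; rewrite sqr_ge0.
rewrite ler_sqrt; last by rewrite mulr_ge0 // sumr_ge0 // => i _; [apply: sumr_ge0 => j _|]; rewrite sqr_ge0.
rewrite mulr_suml; apply: ler_sum => i _; rewrite mxE.
exact: (CS_sum2 (fun j => M i j) (fun j => v j 0)).
Qed.

Lemma opnorm_bound p q (M : 'M[R]_(p, q)) v : vnorm (M *m v) <= opnorm M * vnorm v.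
Proof.
have hs : has_sup [set vnorm (M *m v) | v in [set v : 'cV[R]_q | vnorm v <= 1]].
  split; first by exists (vnorm (M *m 0)), 0 => //=; rewrite vnorm0 ler01.
  exists (Num.sqrt (\sum_(i < p) \sum_(j < q) M i j ^+ 2)) => x [w /= w1 <-].
  apply: (le_trans (mv_bound M w)); rewrite -[X in _ <= X]mulr1 ler_wpM2l ?sqrtr_ge0 //.
case: (eqVneq (vnorm v) 0) => [v0|vn].
  by have := mv_bound M v; rewrite v0 !mulr0.
have vp : 0 < vnorm v by rewrite lt_neqAle eq_sym vn vnorm_ge0.
have h : vnorm (M *m ((vnorm v)^-1 *: v)) <= opnorm M.
  apply: (sup_upper_bound hs); exists ((vnorm v)^-1 *: v) => //=.
  by rewrite vnormZ ger0_norm ?invr_ge0 ?vnorm_ge0 // mulVf.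
rewrite -scalemxAr vnormZ ger0_norm ?invr_ge0 ?vnorm_ge0 // in h.
by rewrite -ler_pdivrMr // mulrC.
Qed.

Lemma quadE k (M : 'M[R]_k) v : quad M v = bil M v v.
Proof.
rewrite /quad /bil /dot -mulmxA mxE; apply: eq_bigr => i _; by rewrite mxE.
Qed.

Lemma bilC k (M : 'M[R]_k) v w : M^T = M -> bil M v w = bil M w v.
Proof.
move=> HM; rewrite /bil /dot.
under eq_bigr do rewrite mxE mulr_sumr.
under [RHS]eq_bigr do rewrite mxE mulr_sumr.
rewrite exchange_big /=; apply: eq_bigr => i _; apply: eq_bigr => j _.
have : M^T i j = M i j by rewrite HM.
rewrite mxE => ->. ring.
Qed.

Lemma bilDr k (M : 'M[R]_k) v w1 w2 : bil M v (w1 + w2) = bil M v w1 + bil M v w2.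
Proof. by rewrite /bil mulmxDr dotDr. Qed.
Lemma bilNr k (M : 'M[R]_k) v w : bil M v (- w) = - bil M v w.
Proof. by rewrite /bil mulmxN dotNr. Qed.
Lemma bilBr k (M : 'M[R]_k) v w1 w2 : bil M v (w1 - w2) = bil M v w1 - bil M v w2.
Proof. by rewrite bilDr bilNr. Qed.
Lemma bilZr k (M : 'M[R]_k) v w c : bil M v (c *: w) = c * bil M v w.
Proof. by rewrite /bil -scalemxAr dotZr. Qed.
Lemma bil0r k (M : 'M[R]_k) v : bil M v 0 = 0.
Proof. by rewrite /bil mulmx0 dot0r. Qed.
Lemma bil0l k (M : 'M[R]_k) v : bil M 0 v = 0.
Proof. by rewrite /bil /dot big1 // => i _; rewrite mxE mul0r. Qed.

Lemma quadB k (M : 'M[R]_k) v w r : M^T = M ->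
  quad M (v - r *: w) = quad M v - 2 * r * bil M v w + r ^+ 2 * quad M w.
Proof.
move=> HM; rewrite !quadE /bil mulmxBr -scalemxAr.
rewrite /dot.
have e : forall i : 'I_k, (v - r *: w) i 0 * (M *m v - r *: (M *m w)) i 0 =
   v i 0 * (M *m v) i 0 - 2 * r * (v i 0 * (M *m w) i 0 / 2 + w i 0 * (M *m v) i 0 / 2)
   + r ^+ 2 * (w i 0 * (M *m w) i 0).
  by move=> i; rewrite !mxE; field.
under eq_bigr do rewrite e.
rewrite sum_quad; congr (_ - 2 * r * _ + _).
rewrite big_split /= -!mulr_suml.
have := bilC v w HM; rewrite /bil /dot => ->; field.
all: done.
Qed.

Lemma quadN k (M : 'M[R]_k) v : quad M (- v) = quad M v.
Proof.
rewrite !quadE /bil mulmxN /dot; apply: eq_bigr => i _; rewrite !mxE; ring.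
Qed.

Lemma quad0 k (M : 'M[R]_k) : quad M 0 = 0.
Proof. by rewrite quadE bil0l. Qed.

Lemma quad_ge0 k (M : 'M[R]_k) v : sym_pd M -> 0 <= quad M v.
Proof.
move=> [_ HP]; case: (eqVneq v 0) => [->|vn]; first by rewrite quad0.
exact: ltW (HP v vn).
Qed.

Lemma quad_bound k (M : 'M[R]_k) v dl : opnorm M <= dl -> quad M v <= dl * vnorm v ^+ 2.
Proof.
move=> hM; rewrite quadE /bil.
apply: (le_trans (CS _ _)).
apply: (le_trans (ler_wpM2l (vnorm_ge0 v) (opnorm_bound M v))).
have := ler_wpM2r (vnorm_ge0 v) hM; have := vnorm_ge0 v; nra.
Qed.

Lemma quad_shift k (M : 'M[R]_k) v rho : quad (M - rho%:M) v = quad M v - rho * vnorm v ^+ 2.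
Proof.
have e : forall X Y : 'M[R]_1, (X - Y) 0 0 = X 0 0 - Y 0 0 by move=> X Y; rewrite !mxE.
rewrite /quad mulmxBr mulmxBl e; congr (_ - _).
rewrite mul_mx_scalar -scalemxAl mxE -dot_vv /dot.
by rewrite mxE; congr (_ * _); apply: eq_bigr => i _; rewrite !mxE.
Qed.

Lemma iter_bound k (A : 'M[R]_k) al v p : 0 <= al -> opnorm A <= al ->
  vnorm (iter p (mulmx A) v) <= al ^+ p * vnorm v.
Proof.
move=> al0 hA; elim: p => [|p IH]; first by rewrite expr0 mul1r.
rewrite iterS exprS -mulrA.
apply: (le_trans (opnorm_bound _ _)).
apply: (le_trans (ler_wpM2r (vnorm_ge0 _) hA)).
by rewrite ler_wpM2l.
Qed.

Lemma CS_Q n k (M : 'M[R]_k) (f h : 'I_n -> 'cV[R]_k) : M^T = M -> (forall v, 0 <= quad M v) ->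
  \sum_(i < n) bil M (f i) (h i) <=
  Num.sqrt (\sum_(i < n) quad M (f i)) * Num.sqrt (\sum_(i < n) quad M (h i)).
Proof.
move=> HM Hp; apply: disc; first by apply: sumr_ge0 => i _.
move=> t; rewrite -sum_quad; apply: sumr_ge0 => i _; rewrite -quadB //.
Qed.

End Vec.

Section Agent.
Variable R : realType.
Variables (N d m : nat) (A : 'M[R]_d) (B : 'M[R]_(d, m)) (x0 : 'cV[R]_d)
  (Q : 'M[R]_d) (Rm : 'M[R]_m) (H : 'M[R]_m) (lam : nat -> R).

Local Notation traj := (traj A B).

Lemma traj_lin (u D : nat -> 'cV[R]_m) r t :
  traj x0 (fun s => u s - r *: D s) t = traj x0 u t - r *: traj 0 D t.
Proof.
elim: t => [|t IH] /=; first by rewrite scaler0 subr0.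
rewrite IH mulmxBr mulmxBr -!scalemxAr scalerDr opprD addrACA.
done.
Qed.

Definition Lc (u : nat -> 'cV[R]_m) : R :=
  \sum_(t < N.+1) quad Q (traj x0 u t) +
  \sum_(t < N) (quad Rm (u t) + lam t * quad H (u t)).

Lemma payoffE u e : payoff N A B x0 Q Rm lam u e =
  - Lc u + \sum_(t < N) lam t * (e t + quad H (u t)).
Proof.
rewrite /payoff /Lc big_ord_recr /= !opprD -!sumrN.
have -> : forall (a S1 S2 S3 : R), S1 - a + S2 + S3 = - a + (S1 + S2 + S3) by move=> *; ring.
congr (_ + _).
rewrite -!big_split /=; apply: eq_bigr => t _; ring.
Qed.

Definition BL (u D : nat -> 'cV[R]_m) : R :=
  \sum_(t < N.+1) bil Q (traj x0 u t) (traj 0 D t) +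
  \sum_(t < N) (bil Rm (u t) (D t) + lam t * bil H (u t) (D t)).
Definition QL (D : nat -> 'cV[R]_m) : R :=
  \sum_(t < N.+1) quad Q (traj 0 D t) +
  \sum_(t < N) (quad Rm (D t) + lam t * quad H (D t)).

Hypotheses (HQ : Q^T = Q) (HR : Rm^T = Rm) (HH : H^T = H).

Lemma Lc_pert u D r : Lc (fun s => u s - r *: D s) = Lc u - 2 * r * BL u D + r ^+ 2 * QL D.
Proof.
rewrite /Lc /BL /QL.
under eq_bigr do rewrite traj_lin quadB //.
rewrite sum_quad.
have e : forall t : 'I_N, quad Rm (u t - r *: D t) + lam t * quad H (u t - r *: D t) =
  (quad Rm (u t) + lam t * quad H (u t)) - 2 * r * (bil Rm (u t) (D t) + lam t * bil H (u t) (D t))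
  + r ^+ 2 * (quad Rm (D t) + lam t * quad H (D t)).
  by move=> t; rewrite !quadB //; ring.
under [X in _ + X = _]eq_bigr do rewrite e.
rewrite sum_quad; ring.
Qed.

Lemma foc u : (forall v, Lc u <= Lc v) -> forall D, BL u D <= 0.
Proof.
move=> opt D; apply: (@lim0 _ _ (QL D / 2)) => r r0 r1.
have := opt (fun s => u s - r *: D s); rewrite Lc_pert => h.
have : r * (2 * BL u D) <= r * (r * QL D) by rewrite expr2 in h; lra.
rewrite ler_pM2l // => h2.
have -> : r * (QL D / 2) = (r * QL D) / 2 by rewrite mulrA.
lra.
Qed.

Lemma opt_L (a : nat -> R) U E :
  feasible N H a U E ->
  (forall u e, feasible N H a u e ->
     payoff N A B x0 Q Rm lam u e <= payoff N A B x0 Q Rm lam U E) ->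
  forall v, Lc U <= Lc v.
Proof.
move=> fU opt v.
have hf : feasible N H a v (fun t => E t + quad H (U t) - quad H (v t)).
  by move=> t tN; have := fU t tN; lra.
have := opt _ _ hf.
rewrite !payoffE.
have -> : \sum_(t < N) lam t * (E t + quad H (U t) - quad H (v t) + quad H (v t)) =
          \sum_(t < N) lam t * (E t + quad H (U t)).
  by apply: eq_bigr => t _; rewrite subrK.
by rewrite lerD2r lerN2.
Qed.

Lemma payoff_bump u e k c : (k < N)%N ->
  payoff N A B x0 Q Rm lam u (fun s => e s + (if s == k then c else 0)) =
  payoff N A B x0 Q Rm lam u e + lam k * c.
Proof.
move=> kN; rewrite !payoffE -addrA; congr (_ + _).
have -> : \sum_(t < N) lam t * (e t + (if (t : nat) == k then c else 0) + quad H (u t)) =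
  \sum_(t < N) lam t * (e t + quad H (u t)) + \sum_(t < N) lam t * (if (t : nat) == k then c else 0).
  by rewrite -big_split; apply: eq_bigr => t _ /=; ring.
congr (_ + _).
rewrite (bigD1 (Ordinal kN)) //= eqxx big1 ?addr0 // => j hj.
have -> : ((j : nat) == k) = false.
  apply/negbTE; move: hj; apply: contra => /eqP ej; apply/eqP/val_inj => /=.
  done.
by rewrite mulr0.
Qed.

End Agent.

From mathcomp Require Import zify.

Section Bound.
Variable R : realType.

Lemma sum_single (F : nat -> R) k N : (k < N)%N -> (forall t, t != k -> F t = 0) ->
  \sum_(t < N) F t = F k.
Proof.
move=> kN hF; rewrite (bigD1 (Ordinal kN)) //= big1 ?addr0 // => j hj.
apply: hF; move: hj; apply: contra => /eqP ej; apply/eqP/val_inj => /=.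
done.
Qed.

Lemma sum_tail (F : nat -> R) k N : (k <= N)%N ->
  \sum_(t < N.+1) (if (k < t)%N then F t else 0) = \sum_(k.+1 <= t < N.+1) F t.
Proof.
move=> kN; rewrite -(big_mkord xpredT (fun t => if (k < t)%N then F t else 0)) (big_cat_nat _ (m := 0) (n := k.+1)) //= ?ltnS //.
rewrite big_nat_cond big1 ?add0r; last first.
  by move=> i /andP[/andP[_ hi] _]; rewrite ltnNge -ltnS hi.
by apply: eq_big_nat => i /andP[hi _]; rewrite hi.
Qed.

Lemma pow2M (a : R) e : (a ^+ e) ^+ 2 = a ^+ (2 * e).
Proof. by rewrite -exprM mulnC. Qed.

Lemma sq_le (a b : R) : 0 <= a -> a <= b -> a ^+ 2 <= b ^+ 2.
Proof. by move=> a0 ab; rewrite !expr2 ler_pM. Qed.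

Variables (N d m : nat) (A : 'M[R]_d) (B : 'M[R]_(d, m)) (x0 : 'cV[R]_d)
  (Q : 'M[R]_d) (Rm : 'M[R]_m) (H : 'M[R]_m) (lam : nat -> R).
Variables (dl al be : R).
Hypotheses (HQ : sym_pd Q) (HR : sym_pd Rm) (HH : sym_pd H).
Hypotheses (dl0 : 0 <= dl) (al0 : 0 <= al) (be0 : 0 <= be).
Hypotheses (nQ : opnorm Q <= dl) (nA : opnorm A <= al) (nB : opnorm B <= be).
Hypothesis lam0 : forall t, (t < N)%N -> 0 <= lam t.
Variable U : nat -> 'cV[R]_m.
Hypothesis opt : forall v, Lc N A B x0 Q Rm H lam U <= Lc N A B x0 Q Rm H lam v.
Variable k : nat.
Hypothesis kN : (k < N)%N.

Local Notation x := (traj A B x0 U).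
Definition D1 t := if t == k then U k else 0.
Definition D2 t := if (k <= t)%N then U t else 0.

Lemma g_low t : (t <= k)%N -> traj A B 0 D1 t = 0.
Proof.
elim: t => [|t IH] ht //=.
by rewrite IH ?(ltnW ht) // /D1 (ltn_eqF ht) !mulmx0 addr0.
Qed.

Lemma g_high i : traj A B 0 D1 (k + i.+1) = iter i (mulmx A) (B *m U k).
Proof.
elim: i => [|i IH]; first by rewrite addn1 /= g_low // /D1 eqxx mulmx0 add0r.
rewrite addnS /= IH /D1.
have -> : (k + i.+1 == k) = false by apply/negbTE; lia.
by rewrite mulmx0 addr0.
Qed.

Lemma q_low t : (t <= k)%N -> traj A B 0 D2 t = 0.
Proof.
elim: t => [|t IH] ht //=.
rewrite /D2; have -> : (k <= t)%N = false by lia.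
by rewrite IH ?(ltnW ht) // !mulmx0 addr0.
Qed.

Lemma q_high i : x (k + i) - traj A B 0 D2 (k + i) = iter i (mulmx A) (x k).
Proof.
elim: i => [|i IH]; first by rewrite addn0 q_low // subr0.
rewrite addnS /= /D2 leq_addr -IH mulmxBr.
by rewrite opprD addrACA subrr addr0.
Qed.

Definition Sk := \sum_(k.+1 <= t < N.+1) al ^+ (2 * (t - k.+1)).

Lemma agent_bound :
  quad Rm (U k) + lam k * quad H (U k) <= dl * Sk * al * be * vnorm (x k) * vnorm (U k).
Proof.
set K := quad Rm (U k) + lam k * quad H (U k).
have Qpsd : forall v, 0 <= quad Q v by move=> v; exact: quad_ge0.
have S0 : 0 <= Sk by apply: sumr_ge0 => t _; rewrite exprn_ge0.
pose xr (t : nat) := if (k < t)%N then x t else 0.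
pose pr (t : nat) := if (k < t)%N then iter (t - k) (mulmx A) (x k) else 0.
pose g := traj A B 0 D1.
set X := \sum_(t < N.+1) quad Q (xr t).
set P1 := \sum_(t < N.+1) bil Q (xr t) (pr t).
set Gs := \sum_(t < N.+1) bil Q (xr t) (g t).
set Pa := \sum_(t < N.+1) quad Q (pr t).
set Gb := \sum_(t < N.+1) quad Q (g t).
have F2 : Gs + K <= 0.
  have := foc HQ.1 HR.1 HH.1 opt D1; rewrite /BL.
  have -> : \sum_(t < N) (bil Rm (U t) (D1 t) + lam t * bil H (U t) (D1 t)) = K.
    rewrite (@sum_single (fun t => bil Rm (U t) (D1 t) + lam t * bil H (U t) (D1 t)) k) //.
      by rewrite /D1 eqxx /K !quadE.
    by move=> t /negbTE ht; rewrite /D1 ht !bil0r mulr0 addr0.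
  congr (_ + _ <= _); apply: eq_bigr => t _.
  rewrite /xr; case: ltnP => // ht.
  by rewrite /g g_low // !bil0r.
have F1 : X - P1 + K <= 0.
  have := foc HQ.1 HR.1 HH.1 opt D2; rewrite /BL.
  apply: le_trans; apply: lerD.
    rewrite /X /P1 -sumrB le_eqVlt; apply/orP; left; apply/eqP.
    apply: eq_bigr => t _; rewrite /xr /pr; case: ltnP => ht.
      have hq := q_high (t - k); rewrite subnKC in hq; last exact: ltnW.
      have -> : traj A B 0 D2 t = x t - iter (t - k) (mulmx A) (x k).
        by rewrite -hq opprB addrCA subrr addr0.
      by rewrite bilBr quadE.
    by rewrite q_low // bil0r quad0 bil0l subr0.
  rewrite (bigD1 (Ordinal kN)) //= /D2 leqnn -!quadE -/K lerDl.
  apply: sumr_ge0 => t _; case: ifP => _; last by rewrite !bil0r mulr0 addr0.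
  rewrite -!quadE addr_ge0 ?mulr_ge0 ?lam0 ?quad_ge0 //.
have CS1 : P1 <= Num.sqrt X * Num.sqrt Pa := CS_Q (fun t : 'I_N.+1 => xr t) (fun t => pr t) HQ.1 Qpsd.
have CS2 : - Gs <= Num.sqrt X * Num.sqrt Gb.
  have := CS_Q (fun t : 'I_N.+1 => xr t) (fun t => - g t) HQ.1 Qpsd.
  have e1 : \sum_(i < N.+1) bil Q (xr i) (- g i) = - Gs.
    by rewrite /Gs -sumrN; apply: eq_bigr => i _; rewrite bilNr.
  have e2 : \sum_(i < N.+1) quad Q (- g i) = Gb.
    by apply: eq_bigr => i _; rewrite quadN.
  by rewrite e1 e2.
set nx := vnorm (x k). set nu := vnorm (U k).
have nx0 : 0 <= nx := vnorm_ge0 _.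
have nu0 : 0 <= nu := vnorm_ge0 _.
have PaB : Pa <= dl * al ^+ 2 * nx ^+ 2 * Sk.
  rewrite /Sk mulr_sumr -sum_tail; last exact: ltnW.
  apply: ler_sum => t _; rewrite /pr; case: ltnP => ht; last by rewrite quad0.
  apply: (le_trans (quad_bound _ nQ)).
  have hb := iter_bound (x k) (t - k) al0 nA.
  have := sq_le (vnorm_ge0 _) hb; rewrite exprMn pow2M => hb2.
  have -> : dl * al ^+ 2 * nx ^+ 2 * al ^+ (2 * (t - k.+1)) = dl * (al ^+ (2 * (t - k)) * nx ^+ 2).
    have -> : (2 * (t - k) = 2 + 2 * (t - k.+1))%N by clear -ht; lia.
    by rewrite exprD; ring.
  by rewrite ler_wpM2l.
have GbB : Gb <= dl * be ^+ 2 * nu ^+ 2 * Sk.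
  rewrite /Sk mulr_sumr -sum_tail; last exact: ltnW.
  apply: ler_sum => t _; case: ltnP => ht; last by rewrite /g g_low // quad0.
  apply: (le_trans (quad_bound _ nQ)).
  have := g_high (t - k.+1); have -> : (k + (t - k.+1).+1 = t)%N by clear -ht; lia.
  rewrite /g => ->.
  have hb := iter_bound (B *m U k) (t - k.+1) al0 nA.
  have hb' : vnorm (iter (t - k.+1) (mulmx A) (B *m U k)) <= al ^+ (t - k.+1) * (be * nu).
    apply: (le_trans hb); rewrite ler_wpM2l ?exprn_ge0 //.
    apply: (le_trans (opnorm_bound _ _)); by rewrite ler_wpM2r.
  have := sq_le (vnorm_ge0 _) hb'; rewrite !exprMn pow2M => hb2.
  have -> : dl * be ^+ 2 * nu ^+ 2 * al ^+ (2 * (t - k.+1)) = dl * (al ^+ (2 * (t - k.+1)) * (be ^+ 2 * nu ^+ 2)).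
    by ring.
  by rewrite ler_wpM2l.
set c := Num.sqrt (dl * Sk).
have c0 : 0 <= c := sqrtr_ge0 _.
have c2 : c ^+ 2 = dl * Sk by rewrite sqr_sqrtr // mulr_ge0.
have sPa : Num.sqrt Pa <= c * al * nx.
  rewrite -(ger0_norm (x := c * al * nx)) ?mulr_ge0 // -sqrtr_sqr ler_wsqrtr //.
  by rewrite !exprMn c2; apply: (le_trans PaB); rewrite le_eqVlt; apply/orP; left; apply/eqP; ring.
have sGb : Num.sqrt Gb <= c * be * nu.
  rewrite -(ger0_norm (x := c * be * nu)) ?mulr_ge0 // -sqrtr_sqr ler_wsqrtr //.
  by rewrite !exprMn c2; apply: (le_trans GbB); rewrite le_eqVlt; apply/orP; left; apply/eqP; ring.
move: CS1 CS2; set z := Num.sqrt X => CS1 CS2.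
have X0 : 0 <= X by apply: sumr_ge0.
have z0 : 0 <= z := sqrtr_ge0 _.
have zX : z ^+ 2 = X by rewrite sqr_sqrtr.
have K1 : K <= z * (c * al * nx) - z ^+ 2.
  have := ler_wpM2l z0 sPa; rewrite zX; lra.
have K2 : K <= z * (c * be * nu).
  have := ler_wpM2l z0 sGb; lra.
have -> : dl * Sk * al * be * nx * nu = (c * al * nx) * (c * be * nu) by rewrite -c2; ring.
have a0 : 0 <= c * al * nx by rewrite !mulr_ge0.
have b0 : 0 <= c * be * nu by rewrite !mulr_ge0.
case: (lerP z (c * al * nx)) => hz.
  by apply: (le_trans K2); rewrite ler_wpM2r.
apply: (le_trans K1); rewrite expr2 -mulrBr.
apply: (@le_trans _ _ 0); last by rewrite mulr_ge0.
by rewrite mulr_ge0_le0 // subr_le0 ltW.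
Qed.

End Bound.

Section Final.
Variable R : realType.

Lemma traj_norm d m (A : 'M[R]_d) (B : 'M[R]_(d, m)) x0 (u : nat -> 'cV[R]_m)
   (al be gam : R) (s : nat -> R) t :
  0 <= al -> 0 <= be -> opnorm A <= al -> opnorm B <= be -> vnorm x0 <= gam ->
  (forall j, (j < t)%N -> vnorm (u j) <= s j) ->
  vnorm (traj A B x0 u t) <= gam * al ^+ t + be * \sum_(j < t) s j * al ^+ (t - j.+1).
Proof.
move=> al0 be0 hA hB hx; elim: t => [|t IH] hu.
  by rewrite expr0 mulr1 big_ord0 mulr0 addr0.
rewrite /= big_ord_recr /= subnn expr0 mulr1.
apply: (le_trans (vnormD _ _)).
have h1 : vnorm (A *m traj A B x0 u t) <= al * (gam * al ^+ t + be * \sum_(j < t) s j * al ^+ (t - j.+1)).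
  apply: (le_trans (opnorm_bound _ _)); apply: (le_trans (ler_wpM2r (vnorm_ge0 _) hA)).
  by rewrite ler_wpM2l // IH // => j hj; apply: hu; apply: ltnW.
have h2 : vnorm (B *m u t) <= be * s t.
  apply: (le_trans (opnorm_bound _ _)); apply: (le_trans (ler_wpM2r (vnorm_ge0 _) hB)).
  by rewrite ler_wpM2l // hu.
have e : al * (gam * al ^+ t + be * \sum_(j < t) s j * al ^+ (t - j.+1)) =
   gam * al ^+ t.+1 + be * \sum_(i < t) s i * al ^+ (t.+1 - i.+1).
  rewrite mulrDr exprS mulrCA; congr (_ + _).
  rewrite mulrCA mulr_sumr; congr (be * _); apply: eq_bigr => j _.
  rewrite mulrCA -exprS subSS; congr (_ * _ ^+ _).
  by have := ltn_ord j; clear; lia.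
rewrite mulrDr addrA -e.
by apply: lerD.
Qed.

Lemma rearr (al be gam : R) (s : nat -> R) k N :
  Sk N al k * al * (gam * al ^+ k + be * \sum_(j < k) s j * al ^+ (k - j.+1)) =
  \sum_(k.+1 <= tau < N.+1) (gam * al ^+ (2 * tau - k - 1)
        + be * \sum_(j < k) s j * al ^+ (2 * tau - j - k - 2)).
Proof.
rewrite /Sk !mulr_suml; apply: eq_big_nat => tau /andP[h1 _].
rewrite -exprSr mulrDr; congr (_ + _).
  rewrite mulrCA -exprD; congr (_ * _ ^+ _); by clear -h1; lia.
rewrite mulrCA mulr_sumr; congr (be * _); apply: eq_bigr => j _.
rewrite mulrCA -exprD; congr (_ * _ ^+ _).
by have := ltn_ord j; clear -h1; lia.
Qed.

End Final.

From mathcomp Require Import zify.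
Unset Implicit Arguments.

Theorem theorem3 (R : realType) (n N d m : nat)
    (A : 'I_n -> 'M[R]_d) (B : 'I_n -> 'M[R]_(d, m)) (H : 'I_n -> 'M[R]_m)
    (x0 : 'I_n -> 'cV[R]_d) (a : 'I_n -> nat -> R)
    (gamma alpha beta rho lamd dmax : R) :
  (1 <= N)%N ->
  0 < gamma -> 0 < alpha -> 0 < beta -> 0 < rho ->
  (forall i, vnorm (x0 i) <= gamma) ->
  (forall i, opnorm (A i) <= alpha) ->
  (forall i, opnorm (B i) <= beta) ->
  (forall i, sym_pd (H i)) ->
  (forall i, psd (H i - rho%:M)) ->
  (forall t, (t < N)%N -> 0 < Ctot a t) ->
  0 < lamd -> 0 < dmax ->
  dmax * (\sum_(1 <= t < N.+1) gamma * alpha ^+ (2 * t - 1))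
    <= Num.sqrt (Ctot a 0 * rho) / (n%:R * beta) * lamd ->
  (forall k, (0 < k)%N -> (k < N)%N ->
     dmax * (\sum_(k.+1 <= t < N.+1)
               (gamma * alpha ^+ (2 * t - k - 1)
                + beta * \sum_(j < k) Num.sqrt (Ctot a j / rho)
                                      * alpha ^+ (2 * t - j - k - 2)))
     <= Num.sqrt (Ctot a k * rho) / (n%:R * beta) * lamd) ->
  forall (Q : 'I_n -> 'M[R]_d) (Rm : 'I_n -> 'M[R]_m),
    (forall i, sym_pd (Q i)) -> (forall i, sym_pd (Rm i)) ->
    (forall i, opnorm (Q i) <= dmax) ->
  forall (lam : nat -> R) (U : 'I_n -> nat -> 'cV[R]_m) (E : 'I_n -> nat -> R),
    competitive_equilibrium N A B x0 H a Q Rm lam U E ->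
    forall t, (t < N)%N -> lam t <= lamd.
Proof.
move=> N1 g0 a0 b0 r0 hx hA hB hHpd hHr hC l0 d0 hyp0 hypk Q Rm hQ hR hQn lam U E [hag hclr] t tN.
rewrite leNgt; apply/negP => hlt.
have lt0 : 0 < lam t by apply: lt_trans hlt.
have n0 : (0 < n)%N.
  rewrite lt0n; apply/eqP => n0e.
  have := hC 0%N N1; rewrite /Ctot big1 ?ltxx // => i _.
  by have := ltn_ord i; rewrite {2}n0e.
pose i0 : 'I_n := Ordinal n0.
have lam_ge0 : forall j, (j < N)%N -> 0 <= lam j.
  move=> j jN; have [fE opt] := hag i0.
  have hf : feasible N (H i0) (a i0) (U i0) (fun s => E i0 s + (if s == j then -1 else 0)).
    move=> s sN; have := fE s sN; case: (s == j); lra.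
  have := opt _ _ hf; rewrite (payoff_bump _ _ _ _ _ (H i0)) //; lra.
have qH_le : forall i j, (j < N)%N -> quad (H i) (U i j) <= Ctot a j.
  move=> i j jN.
  have h1 : \sum_(i' < n) quad (H i') (U i' j) <= Ctot a j.
    have -> : Ctot a j = \sum_(i' < n) (a i' j - E i' j).
      by rewrite sumrB (hclr j jN) subr0.
    by apply: ler_sum => i' _; have := (hag i').1 j jN; lra.
  apply: le_trans h1; rewrite (bigD1 i) //= lerDl.
  by apply: sumr_ge0 => i' _; apply: quad_ge0.
set s := fun j => Num.sqrt (Ctot a j / rho).
have unorm : forall i j, (j < N)%N -> vnorm (U i j) <= s j.
  move=> i j jN.
  have h1 : rho * vnorm (U i j) ^+ 2 <= Ctot a j.
    have := hHr i (U i j); rewrite quad_shift => hp.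
    have := qH_le i j jN; lra.
  rewrite /s -(ger0_norm (vnorm_ge0 (U i j))) -sqrtr_sqr ler_wsqrtr //.
  by rewrite ler_pdivlMr // mulrC.
have bind : forall i, E i t = a i t - quad (H i) (U i t).
  move=> i; have [fE opt] := hag i.
  have := fE t tN; rewrite le_eqVlt => /orP[/eqP //|hl].
  have hf : feasible N (H i) (a i) (U i)
      (fun s => E i s + (if s == t then a i t - quad (H i) (U i t) - E i t else 0)).
    move=> s' sN; have := fE s' sN; case: eqP => [->|_]; lra.
  have := opt _ _ hf; rewrite (payoff_bump _ _ _ _ _ (H i)) //.
  have : 0 < lam t * (a i t - quad (H i) (U i t) - E i t) by rewrite mulr_gt0 // subr_gt0.
  lra.
have sumH : \sum_(i < n) quad (H i) (U i t) = Ctot a t.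
  have -> : Ctot a t = \sum_(i < n) (a i t - E i t).
    by rewrite sumrB (hclr t tN) subr0.
  by apply: eq_bigr => i _; rewrite bind; ring.
have [i hi] : exists i, Ctot a t / n%:R <= quad (H i) (U i t).
  case: (boolP [exists i, Ctot a t / n%:R <= quad (H i) (U i t)]) => [/existsP //|].
  rewrite negb_exists => /forallP hall.
  have : \sum_(i < n) quad (H i) (U i t) < \sum_(i < n) (Ctot a t / n%:R).
    rewrite (bigD1 i0) //= [X in _ < X](bigD1 i0) //=.
    apply: ltr_leD; first by rewrite ltNge hall.
    by apply: ler_sum => i _; rewrite ltW // ltNge hall.
  have e : forall x : R, x / n%:R *+ n = x.
    by move=> x; rewrite -(mulr_natr (x / n%:R)) divfK // pnatr_eq0 -lt0n.
  by rewrite sumH sumr_const card_ord e ltxx.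
have [fE opt] := hag i.
have optL := opt_L fE opt.
have hb := agent_bound (hQ i) (hR i) (hHpd i) (ltW d0) (ltW a0) (ltW b0) (hQn i) (hA i) (hB i) lam_ge0 optL tN.
have hxn : vnorm (traj (A i) (B i) (x0 i) (U i) t) <=
    gamma * alpha ^+ t + beta * \sum_(j < t) s j * alpha ^+ (t - j.+1).
  apply: (traj_norm (ltW a0) (ltW b0) (hA i) (hB i) (hx i)).
  by move=> j hj; apply: unorm; apply: ltn_trans hj tN.
have hyp_t : dmax * (Sk N alpha t * alpha * (gamma * alpha ^+ t + beta * \sum_(j < t) s j * alpha ^+ (t - j.+1)))
    <= Num.sqrt (Ctot a t * rho) / (n%:R * beta) * lamd.
  rewrite rearr; case: (posnP t) => [t0|tp]; last exact: hypk.
  subst t.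
  under eq_bigr do rewrite big_ord0 mulr0 addr0 subn0.
  exact: hyp0.
move: hb hxn hyp_t hi.
set S := Sk N alpha t.
set xb := gamma * alpha ^+ t + _.
set nx := vnorm _. set nu := vnorm (U i t). set h := quad (H i) (U i t).
set C := Ctot a t.
move=> hb hxn hyp_t hi.
have S0 : 0 <= S by apply: sumr_ge0 => tau _; rewrite exprn_ge0 // ltW.
have nu0 : 0 <= nu := vnorm_ge0 _.
have nx0 : 0 <= nx := vnorm_ge0 _.
have qR0 : 0 <= quad (Rm i) (U i t) := quad_ge0 _ (hR i).
have hrho : rho * nu ^+ 2 <= h by have := hHr i (U i t); rewrite /psd quad_shift -/h -/nu; lra.
have C0 : 0 < C := hC t tN.
have nn1 : 1 <= (n%:R : R) by rewrite ler1n.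
have nn0 : 0 < (n%:R : R) by lra.
set c := dmax * S * alpha * beta * xb.
have h1 : lam t * h <= c * nu.
  apply: le_trans (_ : dmax * S * alpha * beta * nx * nu <= _); first lra.
  rewrite /c ler_wpM2r // ler_wpM2l // !mulr_ge0 // ltW //.
set w := Num.sqrt (C * rho).
have w2 : w ^+ 2 = C * rho by rewrite sqr_sqrtr // mulr_ge0 // ltW.
have w0 : 0 <= w := sqrtr_ge0 _.
have h2 : n%:R * c <= w * lamd.
  have -> : c = beta * (dmax * (S * alpha * xb)) by rewrite /c; ring.
  have := ler_wpM2l (ltW b0) hyp_t.
  have -> : beta * (w / (n%:R * beta) * lamd) = w * lamd / n%:R by field; lra.
  by rewrite ler_pdivlMr // mulrC.
have h0 : 0 < h by apply: lt_le_trans hi; rewrite divr_gt0.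
have h3 : C <= n%:R * h by rewrite mulrC -ler_pdivrMr.
have xb0 : 0 <= xb := le_trans nx0 hxn.
have c0 : 0 <= c by rewrite /c !mulr_ge0 // ltW.
have h4 : (lam t * h) ^+ 2 <= (c * nu) ^+ 2 by apply: sq_le => //; rewrite mulr_ge0 // ltW.
have h5 : lam t ^+ 2 * h * rho <= c ^+ 2.
  have : (lam t ^+ 2 * h * rho) * h <= c ^+ 2 * h.
    rewrite exprMn in h4.
    have : c ^+ 2 * (rho * nu ^+ 2) <= c ^+ 2 * h by rewrite ler_wpM2l // sqr_ge0.
    nra.
  by rewrite ler_pM2r.
have h6 : (n%:R * c) ^+ 2 <= (w * lamd) ^+ 2 by apply: sq_le => //; rewrite mulr_ge0 // ltW.
rewrite [X in _ <= X]exprMn w2 [X in X <= _]exprMn in h6.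
have h7 : lam t ^+ 2 * C * rho <= C * rho * lamd ^+ 2.
  have e1 : lam t ^+ 2 * C * rho <= lam t ^+ 2 * (n%:R * h) * rho.
    have := mulr_ge0 (sqr_ge0 (lam t)) (ltW r0); nra.
  have e2 : lam t ^+ 2 * (n%:R * h) * rho <= n%:R ^+ 2 * (lam t ^+ 2 * h * rho).
    have hz : 0 <= lam t ^+ 2 * h * rho by rewrite !mulr_ge0 ?sqr_ge0 // ltW.
    have hn : n%:R <= (n%:R : R) ^+ 2 by rewrite expr2 -{1}(mul1r n%:R) ler_wpM2r // ltW.
    have -> : lam t ^+ 2 * (n%:R * h) * rho = n%:R * (lam t ^+ 2 * h * rho) by ring.
    by rewrite ler_wpM2r.
  have e3 : n%:R ^+ 2 * (lam t ^+ 2 * h * rho) <= n%:R ^+ 2 * c ^+ 2.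
    by rewrite ler_wpM2l ?sqr_ge0.
  lra.
have h8 : lam t ^+ 2 <= lamd ^+ 2.
  have Cr : 0 < C * rho by rewrite mulr_gt0.
  rewrite -(ler_pM2r Cr); lra.
have : lamd ^+ 2 < lam t ^+ 2 by rewrite ltr_pXn2r // ?nnegrE ltW // (lt_trans l0 hlt).
lra.
Qed.
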